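(* Let $R$ be a commutative Noetherian ring, $M$ a finitely generated $R$-module, $S$ a subset of $M$, and $F \subseteq \langle S \rangle$ a free $R$-module of rank $i$ such that $M = F \oplus M'$ for some submodule $M' \subseteq M$. Let $S'$ be the projection of $S$ to $M'$ along this internal direct sum. Then for all $\mathfrak{p} \in \mathrm{Spec}(R)$, $\delta_\mathfrak{p}(S',M') = \delta_\mathfrak{p}(S,M) - i$.
   Context: $\langle S\rangle$ denotes the $R$-submodule generated by $S$. For a prime $\mathfrak{p}$, $\delta_\mathfrak{p}(S,M)$ is the largest integer $n \ge 0$ such that there is a free $R_\mathfrak{p}$-submodule $G \subseteq \langle S\rangle_\mathfrak{p}$ of rank $n$ which is a direct summand of $M_\mathfrak{p}$. *)

(* Defs.v *)
From HB Require Import structures.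
From mathcomp Require Import all_boot all_order all_algebra.
Set Implicit Arguments. Unset Strict Implicit. Unset Printing Implicit Defensive.
Import Order.TTheory GRing.Theory Num.Theory.
Local Open Scope ring_scope.

Definition ideal (R : comPzRingType) (I : R -> Prop) : Prop :=
  I 0 /\ (forall a b, I a -> I b -> I (a + b)) /\ (forall r a, I a -> I (r * a)).

Definition prime_ideal (R : comPzRingType) (p : R -> Prop) : Prop :=
  ideal p /\ ~ p 1 /\ (forall a b, p (a * b) -> p a \/ p b).

Definition noetherian (R : comPzRingType) : Prop :=
  forall I : R -> Prop, ideal I ->
    exists n (g : 'I_n -> R),
      forall a, I a <-> exists r : 'I_n -> R, a = \sum_(k < n) r k * g k.

Section Modules.
Variables (K : pzRingType) (V : lmodType K).

Definition submod (P : V -> Prop) : Prop :=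
  P 0 /\ (forall x y, P x -> P y -> P (x + y)) /\ (forall (r : K) x, P x -> P (r *: x)).

Definition gen_sub (S : V -> Prop) : V -> Prop :=
  fun v => exists n (r : 'I_n -> K) (x : 'I_n -> V),
    (forall k, S (x k)) /\ v = \sum_(k < n) r k *: x k.

Definition fin_gen : Prop :=
  exists n (x : 'I_n -> V), forall v, gen_sub (fun y => exists k, y = x k) v.

Definition lin_indep n (b : 'I_n -> V) : Prop :=
  forall r : 'I_n -> K, \sum_(k < n) r k *: b k = 0 -> forall k, r k = 0.

Definition free_of_rank (G : V -> Prop) (n : nat) : Prop :=
  submod G /\
  exists b : 'I_n -> V, (forall k, G (b k)) /\ lin_indep b /\
    (forall v, G v -> exists r : 'I_n -> K, v = \sum_(k < n) r k *: b k).

Definition internal_dsum (G H : V -> Prop) : Prop :=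
  submod G /\ submod H /\ (forall v, G v -> H v -> v = 0) /\
  (forall v, exists g h, G g /\ H h /\ v = g + h).

Definition direct_summand (G : V -> Prop) : Prop :=
  exists H : V -> Prop, internal_dsum G H.

(* the property whose largest n defines delta: there is a free submodule
   G of rank n contained in T which is a direct summand of V *)
Definition delta_prop (T : V -> Prop) (n : nat) : Prop :=
  exists G : V -> Prop, free_of_rank G n /\ (forall v, G v -> T v) /\ direct_summand G.

End Modules.

Definition is_max (P : nat -> Prop) (d : nat) : Prop :=
  P d /\ forall n, P n -> (n <= d)%N.

(* (Rp, phi) is the localization (t plays the role of (phi s)^-1) R_p of R at the prime p *)
Definition is_loc_ring (R : comPzRingType) (p : R -> Prop)
    (Rp : comPzRingType) (phi : {rmorphism R -> Rp}) : Prop :=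
  (forall s, ~ p s -> exists t, phi s * t = 1) /\
  (forall z : Rp, exists a s t, ~ p s /\ phi s * t = 1 /\ z = phi a * t) /\
  (forall a, phi a = 0 -> exists u, ~ p u /\ u * a = 0).

Definition is_loc_mod (R : comPzRingType) (p : R -> Prop)
    (Rp : comPzRingType) (phi : {rmorphism R -> Rp})
    (N : lmodType R) (Np : lmodType Rp) (iota : N -> Np) : Prop :=
  (forall x y, iota (x + y) = iota x + iota y) /\
  (forall (r : R) x, iota (r *: x) = phi r *: iota x) /\
  (forall z : Np, exists x s t, ~ p s /\ phi s * t = 1 /\ z = t *: iota x) /\
  (forall x, iota x = 0 -> exists u, ~ p u /\ u *: x = 0).

Definition loc_sub (R : comPzRingType) (p : R -> Prop)
    (Rp : comPzRingType) (phi : {rmorphism R -> Rp})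
    (N : lmodType R) (Np : lmodType Rp) (iota : N -> Np) (T : N -> Prop) : Np -> Prop :=
  fun z => exists x s t, T x /\ ~ p s /\ phi s * t = 1 /\ z = t *: iota x.

(* Main.v *)
Require Import Defs.
From HB Require Import structures.
From mathcomp Require Import all_boot all_order all_algebra.
From mathcomp Require Import ring.
From Stdlib Require Import ClassicalEpsilon Classical.
Import GRing.Theory.
Local Open Scope ring_scope.
Set Implicit Arguments. Unset Strict Implicit.

Section Gen.
Variables (K : comPzRingType) (V : lmodType K).

Definition islin (f : V -> K) :=
  (forall x y, f (x + y) = f x + f y) /\ (forall (r : K) x, f (r *: x) = r * f x).

Lemma islin0 {f} : islin f -> f 0 = 0.
Proof. by move=> [_ hZ]; rewrite -(scale0r (0 : V)) hZ mul0r. Qed.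

Lemma islinB {f} : islin f -> forall x y, f (x - y) = f x - f y.
Proof. by move=> [hD hZ] x y; rewrite hD -scaleN1r hZ mulN1r. Qed.

Lemma islin_sum {f} : islin f -> forall n (r : 'I_n -> K) (g : 'I_n -> V),
  f (\sum_k r k *: g k) = \sum_k r k * f (g k).
Proof.
move=> hf n r g; have [hD hZ] := hf.
rewrite (big_morph f hD (islin0 hf)); apply: eq_bigr => k _; by rewrite hZ.
Qed.

Lemma submod_sum (P : V -> Prop) : submod P -> forall n (r : 'I_n -> K) (g : 'I_n -> V),
  (forall k, P (g k)) -> P (\sum_k r k *: g k).
Proof.
move=> [h0 [hD hZ]] n r g hg.
apply: (big_ind P) => //; move=> k _; exact: hZ.
Qed.

Lemma submodB (P : V -> Prop) : submod P -> forall x y, P x -> P y -> P (x - y).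
Proof. move=> [h0 [hD hZ]] x y hx hy; rewrite -scaleN1r; exact: hD (hZ _ _ hy). Qed.

Lemma sum_delta n (b : 'I_n -> V) l : \sum_m (m == l)%:R *: b m = b l.
Proof.
rewrite (bigD1 l) //= eqxx scale1r big1 ?addr0 // => m /negbTE ->; by rewrite scale0r.
Qed.

Lemma sum_deltaR n (r : 'I_n -> K) k : \sum_m r m * (k == m)%:R = r k.
Proof.
rewrite (bigD1 k) //= eqxx mulr1 big1 ?addr0 // => m hm.
by rewrite eq_sym (negbTE hm) mulr0.
Qed.

Definition Dn (T : V -> Prop) n := exists g : 'I_n -> V, (forall k, T (g k)) /\
  exists th : 'I_n -> V -> K, (forall k, islin (th k)) /\
     forall k l, th k (g l) = (k == l)%:R.

Lemma span_submod n (g : 'I_n -> V) :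
  submod (fun v => exists r : 'I_n -> K, v = \sum_k r k *: g k).
Proof.
split. exists (fun=> 0). by rewrite big1 // => k; rewrite scale0r.
split.
  move=> x y [r ->] [r' ->]; exists (fun k => r k + r' k); rewrite -big_split.
  by apply: eq_bigr => k _; rewrite scalerDl.
move=> c x [r ->]; exists (fun k => c * r k); rewrite scaler_sumr.
by apply: eq_bigr => k _; rewrite scalerA.
Qed.

Lemma Dn_delta T n : submod T -> Dn T n -> delta_prop T n.
Proof.
move=> hT [g [hg [th [hl hd]]]].
have thg : forall k (r : 'I_n -> K), th k (\sum_m r m *: g m) = r k.
  move=> k r; rewrite islin_sum //.
  under eq_bigr => m _ do rewrite hd.
  exact: sum_deltaR.
exists (fun v => exists r : 'I_n -> K, v = \sum_k r k *: g k). split.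
  split; first exact: span_submod.
  exists g; split; first by move=> k; exists (fun m => (m == k)%:R); rewrite sum_delta.
  split; last by [].
  by move=> r hr k; have := congr1 (th k) hr; rewrite thg islin0.
split; first by move=> v [r ->]; apply: submod_sum.
exists (fun v => forall k, th k v = 0). split; first exact: span_submod.
split.
  split; first by move=> k; rewrite islin0.
  split; first by move=> x y hx hy k; have [hD _] := hl k; rewrite hD hx hy addr0.
  by move=> r x hx k; have [_ hZ] := hl k; rewrite hZ hx mulr0.
split.
  move=> v [r ->] hv; rewrite big1 // => k _.
  by have := hv k; rewrite thg => ->; rewrite scale0r.
move=> v; exists (\sum_k th k v *: g k), (v - \sum_k th k v *: g k).
split; first by exists (fun k => th k v).
split; last by rewrite addrC subrK.
by move=> k; rewrite islinB // thg subrr.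
Qed.

Lemma delta_Dn T n : delta_prop T n -> Dn T n.
Proof.
move=> [G [[hG [b [hb [hli hsp]]]] [hGT [H [_ [hH [hGH hdec]]]]]]].
have ex : forall v, exists r : 'I_n -> K, H (v - \sum_k r k *: b k).
  move=> v; have [x [h [hx [hh ->]]]] := hdec v.
  have [r ->] := hsp _ hx; exists r; by rewrite addrC addKr.
pose c v := proj1_sig (constructive_indefinite_description _ (ex v)).
have hc v : H (v - \sum_k c v k *: b k).
  exact: (proj2_sig (constructive_indefinite_description _ (ex v))).
have uniq : forall v (r : 'I_n -> K), H (v - \sum_k r k *: b k) -> forall k, c v k = r k.
  move=> v r hr k.
  have h0 : \sum_k (c v k - r k) *: b k = 0.
    apply: hGH.
      apply: submod_sum => // m; exact: hb.
    have -> : \sum_k (c v k - r k) *: b k =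
       (v - \sum_k r k *: b k) - (v - \sum_k c v k *: b k).
      rewrite opprB addrC addrA subrK.
      rewrite -sumrB; apply: eq_bigr => m _; by rewrite scalerBl.
    exact: submodB.
  by apply/eqP; rewrite -subr_eq0; apply/eqP; exact: (hli _ h0 k).
exists b; split; first by move=> k; apply: hGT; apply: hb.
exists (fun k v => c v k); split.
  move=> k; split.
    move=> x y; rewrite (uniq (x + y) (fun m => c x m + c y m)) //.
    have -> : x + y - \sum_k0 (c x k0 + c y k0) *: b k0 =
       (x - \sum_k c x k *: b k) + (y - \sum_k c y k *: b k).
      under eq_bigr => m _ do rewrite scalerDl.
      by rewrite big_split /= opprD addrACA.
    by have [_ [hD _]] := hH; apply: hD.
  move=> r x; rewrite (uniq (r *: x) (fun m => r * c x m)) //.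
  have -> : r *: x - \sum_k0 (r * c x k0) *: b k0 = r *: (x - \sum_k c x k *: b k).
    rewrite scalerBr scaler_sumr; congr (_ - _); apply: eq_bigr => m _; by rewrite scalerA.
  by have [_ [_ hZ]] := hH; apply: hZ.
move=> k l; rewrite (uniq (b l) (fun m => (m == l)%:R)) //.
by rewrite sum_delta subrr; have [h0 _] := hH.
Qed.

End Gen.


Definition isU {K : comPzRingType} (x : K) := exists t, x * t = 1.

Section Step.
Variables (K : comPzRingType) (V : lmodType K).
Hypothesis hloc : forall n (a c : 'I_n -> K), (forall k, ~ isU (a k)) ->
   isU (1 - \sum_k a k * c k).

Lemma islin_comb (f g : V -> K) c : islin f -> islin g -> islin (fun v => f v + c * g v).
Proof.
move=> [fD fZ] [gD gZ]; split.
  by move=> x y; rewrite fD gD mulrDr addrACA.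
by move=> r x; rewrite fZ gZ mulrDr mulrCA.
Qed.

Lemma islin_sumf n (f : 'I_n -> V -> K) (w : 'I_n -> K) :
  (forall j, islin (f j)) -> islin (fun v => \sum_j w j * f j v).
Proof.
move=> hf; split.
  move=> x y; rewrite -big_split; apply: eq_bigr => j _.
  by have [hD _] := hf j; rewrite hD mulrDr.
move=> r x; rewrite mulr_sumr; apply: eq_bigr => j _.
by have [_ hZ] := hf j; rewrite hZ mulrCA.
Qed.

Lemma islin_subZ (f : V -> K) x r y : islin f -> f (x - r *: y) = f x - r * f y.
Proof. by move=> hf; rewrite islinB //; have [_ ->] := hf. Qed.

Lemma step (Q U : V -> Prop) (hQ : submod Q) (hU : submod U) e0 chi0
  (hchi : islin chi0) (he0Q : Q e0) (he0U : U e0) (he1 : chi0 e0 = 1)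
  n (g : 'I_n -> V) (th : 'I_n -> V -> K) :
  (forall k, Q (g k) /\ U (g k)) -> (forall k, islin (th k)) ->
  (forall k l, th k (g l) = (k == l)%:R) ->
  exists g' : 'I_(n.-1) -> V, (forall k, Q (g' k) /\ U (g' k) /\ chi0 (g' k) = 0) /\
  exists th' : 'I_(n.-1) -> V -> K, (forall k, islin (th' k)) /\
     forall k l, th' k (g' l) = (k == l)%:R.
Proof.
case: n g th => [|n] g th hg hl hd /=.
  exists (fun=> 0); split; first by case.
  by exists (fun _ _ => 0); split; case.
pose a l := th l e0; pose c l := chi0 (g l).
have main : forall l0 : 'I_n.+1,
   let g' := fun k : 'I_n => g (lift l0 k) - c (lift l0 k) *: e0 in
   (forall k, Q (g' k) /\ U (g' k) /\ chi0 (g' k) = 0) /\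
   (forall k m, th (lift l0 k) (g' m) = (k == m)%:R - c (lift l0 m) * a (lift l0 k)) /\
   (forall m, th l0 (g' m) = - c (lift l0 m) * a l0).
  move=> l0 g'; split.
    move=> k; have [hq hu] := hg (lift l0 k); split.
      apply: submodB => //; by have [_ [_ hZ]] := hQ; apply: hZ.
    split.
      apply: submodB => //; by have [_ [_ hZ]] := hU; apply: hZ.
    by rewrite /g' islin_subZ // he1 mulr1 subrr.
  split.
    by move=> k m; rewrite /g' islin_subZ // hd (inj_eq lift_inj).
  move=> m; rewrite /g' islin_subZ // hd.
  by rewrite (negbTE (neq_lift _ _)) sub0r mulNr.
case: (classic (exists l0, isU (a l0))) => [[l0 [t ht]]|hno].
  have [hg' [hk hl0]] := main l0.
  exists (fun k => g (lift l0 k) - c (lift l0 k) *: e0); split; first exact: hg'.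
  exists (fun k v => th (lift l0 k) v + (- (a (lift l0 k) * t)) * th l0 v); split.
    by move=> k; apply: islin_comb.
  move=> k m; rewrite hk hl0.
  have -> : - (a (lift l0 k) * t) * (- c (lift l0 m) * a l0) =
     c (lift l0 m) * a (lift l0 k) * (a l0 * t) by ring.
  by rewrite ht mulr1 subrK.
have hnu : forall l, ~ isU (a l).
  by move=> l hu; apply: hno; exists l.
have [hg' [hk _]] := main ord0.
set L := lift (@ord0 n).
have [u hu] := @hloc _ (fun k => a (L k)) (fun k => c (L k)) (fun k => hnu (L k)).
set s := \sum_k a (L k) * c (L k) in hu.
exists (fun k => g (L k) - c (L k) *: e0); split; first exact: hg'.
exists (fun k v => th (L k) v + a (L k) * u * (\sum_j c (L j) * th (L j) v)); split.
  move=> k; apply: islin_comb => //; exact: islin_sumf.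
move=> k m; rewrite hk.
have -> : \sum_j c (L j) * th (L j) (g (L m) - c (L m) *: e0) = c (L m) - c (L m) * s.
  under eq_bigr => j _ do rewrite hk mulrBr.
  rewrite sumrB; congr (_ - _).
    rewrite (bigD1 m) //= eqxx mulr1 big1 ?addr0 // => j hj.
    by rewrite (negbTE hj) mulr0.
  rewrite /s mulr_sumr; apply: eq_bigr => j _; ring.
have -> : a (L k) * u * (c (L m) - c (L m) * s) = c (L m) * a (L k) * ((1 - s) * u) by ring.
by rewrite hu mulr1 subrK.
Qed.

End Step.


Section Peel.
Variables (K : comPzRingType) (V : lmodType K).
Hypothesis hloc : forall n (a c : 'I_n -> K), (forall k, ~ isU (a k)) ->
   isU (1 - \sum_k a k * c k).

Lemma peel (U : V -> Prop) (hU : submod U) i (e : 'I_i -> V) (chi : 'I_i -> V -> K)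
  (hchi : forall k, islin (chi k)) (heU : forall k, U (e k))
  (hce : forall k m, chi k (e m) = (k == m)%:R)
  n (g : 'I_n -> V) (th : 'I_n -> V -> K) :
  (forall k, U (g k)) -> (forall k, islin (th k)) ->
  (forall k l, th k (g l) = (k == l)%:R) ->
  exists g' : 'I_(n - i) -> V, (forall l, U (g' l) /\ forall k, chi k (g' l) = 0) /\
  exists th' : 'I_(n - i) -> V -> K, (forall k, islin (th' k)) /\
     forall k l, th' k (g' l) = (k == l)%:R.
Proof.
move=> hg hl hd.
have claim : forall r, (r <= i)%N -> exists m, m = (n - r)%N /\
  exists g' : 'I_m -> V, (forall l, U (g' l) /\ forall k : 'I_i, (k < r)%N -> chi k (g' l) = 0) /\
  exists th' : 'I_m -> V -> K, (forall k, islin (th' k)) /\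
     forall k l, th' k (g' l) = (k == l)%:R.
  elim=> [|r IH] hr.
    exists n; split; first by rewrite subn0.
    exists g; split; first by move=> l; split.
    by exists th.
  have [m [hm [g' [hg' [th' [hl' hd']]]]]] := IH (ltnW hr).
  pose Q := fun v => forall k : 'I_i, (k < r)%N -> chi k v = 0.
  have hQ : submod Q.
    split; first by move=> k _; rewrite islin0.
    split.
      by move=> x y hx hy k hk; have [hD _] := hchi k; rewrite hD hx // hy // addr0.
    by move=> c x hx k hk; have [_ hZ] := hchi k; rewrite hZ hx // mulr0.
  pose r0 := Ordinal hr.
  have [g'' [hg'' [th'' [hl'' hd'']]]] :=
    @step K V hloc Q U hQ hU (e r0) (chi r0) (hchi r0)
      (fun k hk => ltac:(rewrite hce; case: eqP => [hkr|//]; by rewrite hkr /= ltnn in hk))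
      (heU r0) (ltac:(by rewrite hce eqxx)) m g' th'
      (fun k => conj (proj2 (hg' k)) (proj1 (hg' k))) hl' hd'.
  exists m.-1; split; first by rewrite hm subnS.
  exists g''; split; last by exists th''.
  move=> l; have [hq [hu hc]] := hg'' l; split => // k.
  rewrite ltnS leq_eqVlt => /orP [/eqP hk|hk]; last exact: hq.
  by have -> : k = r0 by apply: val_inj.
have [m [hm [g' [hg' [th' [hl' hd']]]]]] := claim i (leqnn i).
subst m; exists g'; split; last by exists th'.
move=> l; have [hu hc] := hg' l; split => // k; apply: hc; exact: ltn_ord.
Qed.

End Peel.


Section Loc.
Variables (R : comPzRingType) (p : R -> Prop) (hp : prime_ideal p)
  (Rp : comPzRingType) (phi : {rmorphism R -> Rp}) (hRp : is_loc_ring p phi).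

Lemma p0 : p 0. Proof. by case: hp => [[]]. Qed.
Lemma pD a b : p a -> p b -> p (a + b). Proof. by case: hp => [[_ [h _]] _]; apply: h. Qed.
Lemma pM r a : p a -> p (r * a). Proof. by case: hp => [[_ [_ h]] _]; apply: h. Qed.
Lemma pN1 : ~ p 1. Proof. by case: hp => [_ [h _]]. Qed.
Lemma pMn s s' : ~ p s -> ~ p s' -> ~ p (s * s').
Proof. by case: hp => [_ [_ h]] hs hs' /h []. Qed.

Lemma Rp_nontriv : (1 : Rp) <> 0.
Proof.
move=> h10; have [_ [_ hk]] := hRp.
have [u [hu hu0]] := hk 1 (ltac:(by rewrite rmorph1)).
by apply: hu; rewrite -(mulr1 u) hu0; exact: p0.
Qed.

Definition mm (z : Rp) := exists a s t, p a /\ ~ p s /\ phi s * t = 1 /\ z = phi a * t.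

Lemma mm0 : mm 0.
Proof.
exists 0, 1, 1; split; first exact: p0.
by split; [exact: pN1| rewrite rmorph1 mulr1 rmorph0 mul0r].
Qed.

Lemma mmD x y : mm x -> mm y -> mm (x + y).
Proof.
move=> [a [s [t [ha [hs [hst ->]]]]]] [a' [s' [t' [ha' [hs' [hst' ->]]]]]].
exists (a * s' + a' * s), (s * s'), (t * t'); split.
  by apply: pD; rewrite mulrC; apply: pM.
split; first exact: pMn.
split; first by rewrite rmorphM mulrACA hst hst' mulr1.
rewrite rmorphD !rmorphM.
have -> : (phi a * phi s' + phi a' * phi s) * (t * t') =
   phi a * t * (phi s' * t') + phi a' * t' * (phi s * t) by ring.
by rewrite hst hst' !mulr1.
Qed.

Lemma mmM x y : mm y -> mm (x * y).
Proof.
move=> [a [s [t [ha [hs [hst ->]]]]]].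
have [_ [hsur _]] := hRp.
have [b [s0 [t0 [hs0 [hst0 ->]]]]] := hsur x.
exists (b * a), (s0 * s), (t0 * t); split; first exact: pM.
split; first exact: pMn.
split; first by rewrite rmorphM mulrACA hst hst0 mulr1.
rewrite rmorphM; ring.
Qed.

Lemma nonunit_mm z : ~ isU z -> mm z.
Proof.
move=> hz; have [hinv [hsur _]] := hRp.
have [a [s [t [hs [hst ez]]]]] := hsur z; subst z.
exists a, s, t; split => //.
apply: NNPP => ha; apply: hz.
have [t' ht'] := hinv a ha.
exists (phi s * t').
have -> : phi a * t * (phi s * t') = (phi s * t) * (phi a * t') by ring.
by rewrite hst ht' mulr1.
Qed.

Lemma mm_1B z : mm z -> isU (1 - z).
Proof.
move=> [a [s [t [ha [hs [hst ->]]]]]].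
have [hinv _] := hRp.
have hsa : ~ p (s - a).
  move=> h; apply: hs; have -> : s = (s - a) + a by rewrite subrK.
  exact: pD.
have [w hw] := hinv _ hsa.
exists (w * phi s).
have -> : (1 - phi a * t) = phi (s - a) * t by rewrite rmorphB mulrBl hst.
have -> : phi (s - a) * t * (w * phi s) = (phi (s - a) * w) * (phi s * t) by ring.
by rewrite hw hst mulr1.
Qed.

Lemma hloc n (a c : 'I_n -> Rp) : (forall k, ~ isU (a k)) ->
   isU (1 - \sum_k a k * c k).
Proof.
move=> ha; apply: mm_1B.
apply: (big_ind mm); [exact: mm0| exact: mmD|].
move=> k _; rewrite mulrC; apply: mmM; exact: nonunit_mm.
Qed.

Section Mod.
Variables (N : lmodType R) (Np : lmodType Rp) (iota : N -> Np)
  (hN : is_loc_mod p phi iota).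

Lemma iota0 : iota 0 = 0.
Proof.
have [_ [iZ _]] := hN.
by rewrite -(scale0r (0 : N)) iZ rmorph0 scale0r.
Qed.

Lemma iotaB x y : iota (x - y) = iota x - iota y.
Proof.
have [iD [iZ _]] := hN.
by rewrite iD -scaleN1r iZ rmorphN rmorph1 scaleN1r.
Qed.

Lemma wd (W : lmodType Rp) (kap : N -> W)
  (kD : forall x y, kap (x + y) = kap x + kap y)
  (kZ : forall (r : R) x, kap (r *: x) = phi r *: kap x)
  x s t x' s' t' : ~ p s -> phi s * t = 1 -> ~ p s' -> phi s' * t' = 1 ->
  t *: iota x = t' *: iota x' -> t *: kap x = t' *: kap x'.
Proof.
move=> hs hst hs' hst' heq.
have [iD [iZ [_ iker]]] := hN.
have [hinv _] := hRp.
have k0 : kap 0 = 0 by rewrite -(scale0r (0 : N)) kZ rmorph0 scale0r.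
have kB : forall a b, kap (a - b) = kap a - kap b.
  by move=> a b; rewrite kD -scaleN1r kZ rmorphN rmorph1 scaleN1r.
have e1 : iota (s' *: x - s *: x') = 0.
  rewrite iotaB !iZ.
  have -> : phi s' *: iota x = (phi s' * phi s) *: (t *: iota x).
    by rewrite scalerA -mulrA hst mulr1.
  have -> : phi s *: iota x' = (phi s' * phi s) *: (t' *: iota x').
    by rewrite scalerA mulrAC hst' mul1r.
  by rewrite heq subrr.
have [u [hu hu0]] := iker _ e1.
have [w hw] := hinv _ hu.
have e2 : phi s' *: kap x = phi s *: kap x'.
  have := congr1 kap hu0; rewrite kZ k0 kB !kZ => h.
  have := congr1 (fun v => w *: v) h; rewrite scaler0 scalerA mulrC hw scale1r.
  by move/eqP; rewrite subr_eq0 => /eqP.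
have -> : t = (t * t') * phi s' by rewrite -mulrA [t' * _]mulrC hst' mulr1.
rewrite -scalerA e2 scalerA.
by rewrite mulrAC [t * _]mulrC hst mul1r.
Qed.

Lemma loc_map (W : lmodType Rp) (kap : N -> W)
  (kD : forall x y, kap (x + y) = kap x + kap y)
  (kZ : forall (r : R) x, kap (r *: x) = phi r *: kap x) :
  exists H : Np -> W, (forall z w, H (z + w) = H z + H w) /\
    (forall r z, H (r *: z) = r *: H z) /\ (forall x, H (iota x) = kap x) /\
    (forall x s t, ~ p s -> phi s * t = 1 -> H (t *: iota x) = t *: kap x).
Proof.
have [iD [iZ [isurj iker]]] := hN.
have ex : forall z, exists w, exists x s t, ~ p s /\ phi s * t = 1 /\
    z = t *: iota x /\ w = t *: kap x.
  move=> z; have [x [s [t [hs [hst ->]]]]] := isurj z.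
  by exists (t *: kap x), x, s, t.
pose H z := proj1_sig (constructive_indefinite_description _ (ex z)).
have hH : forall x s t, ~ p s -> phi s * t = 1 -> H (t *: iota x) = t *: kap x.
  move=> x s t hs hst.
  have := proj2_sig (constructive_indefinite_description _ (ex (t *: iota x))).
  rewrite -/(H _) => [[x' [s' [t' [hs' [hst' [he ->]]]]]]].
  apply: (wd kD kZ hs' hst' hs hst); by rewrite he.
have [hinv [hsur _]] := hRp.
exists H; split.
  move=> z w.
  have [x1 [s1 [t1 [hs1 [hst1 ->]]]]] := isurj z.
  have [x2 [s2 [t2 [hs2 [hst2 ->]]]]] := isurj w.
  have hs12 : ~ p (s1 * s2) by apply: pMn.
  have hst12 : phi (s1 * s2) * (t1 * t2) = 1 by rewrite rmorphM mulrACA hst1 hst2 mulr1.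
  have -> : t1 *: iota x1 + t2 *: iota x2 = (t1 * t2) *: iota (s2 *: x1 + s1 *: x2).
    rewrite iD !iZ scalerDr !scalerA; congr (_ *: _ + _ *: _).
      by rewrite -mulrA [t2 * _]mulrC hst2 mulr1.
    by rewrite mulrAC [t1 * _]mulrC hst1 mul1r.
  rewrite (hH _ _ _ hs12 hst12) (hH _ _ _ hs1 hst1) (hH _ _ _ hs2 hst2) kD !kZ scalerDr !scalerA; congr (_ *: _ + _ *: _).
    by rewrite -mulrA [t2 * _]mulrC hst2 mulr1.
  by rewrite mulrAC [t1 * _]mulrC hst1 mul1r.
split.
  move=> r z.
  have [x1 [s1 [t1 [hs1 [hst1 ->]]]]] := isurj z.
  have [a [s0 [t0 [hs0 [hst0 ->]]]]] := hsur r.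
  have hs01 : ~ p (s0 * s1) by apply: pMn.
  have hst01 : phi (s0 * s1) * (t0 * t1) = 1 by rewrite rmorphM mulrACA hst0 hst1 mulr1.
  have -> : (phi a * t0) *: (t1 *: iota x1) = (t0 * t1) *: iota (a *: x1).
    by rewrite iZ !scalerA; congr (_ *: _); ring.
  rewrite (hH _ _ _ hs01 hst01) (hH _ _ _ hs1 hst1) kZ !scalerA; congr (_ *: _); ring.
split; last exact: hH.
move=> x; have := hH x 1 1 pN1; rewrite rmorph1 mulr1 !scale1r; by apply.
Qed.

Lemma loc_submod (T : N -> Prop) : submod T -> submod (loc_sub p phi iota T).
Proof.
move=> [h0 [hD hZ]].
have [iD [iZ _]] := hN.
have [_ [hsur _]] := hRp.
split.
  exists 0, 1, 1; split => //; split; first exact: pN1.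
  by rewrite rmorph1 mulr1 iota0 scaler0.
split.
  move=> z w [x1 [s1 [t1 [hx1 [hs1 [hst1 ->]]]]]] [x2 [s2 [t2 [hx2 [hs2 [hst2 ->]]]]]].
  exists (s2 *: x1 + s1 *: x2), (s1 * s2), (t1 * t2); split; first by apply: hD; apply: hZ.
  split; first exact: pMn.
  split; first by rewrite rmorphM mulrACA hst1 hst2 mulr1.
  rewrite iD !iZ scalerDr !scalerA; congr (_ *: _ + _ *: _).
    by rewrite -mulrA [t2 * _]mulrC hst2 mulr1.
  by rewrite mulrAC [t1 * _]mulrC hst1 mul1r.
move=> r z [x1 [s1 [t1 [hx1 [hs1 [hst1 ->]]]]]].
have [a [s0 [t0 [hs0 [hst0 ->]]]]] := hsur r.
exists (a *: x1), (s0 * s1), (t0 * t1); split; first exact: hZ.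
split; first exact: pMn.
split; first by rewrite rmorphM mulrACA hst0 hst1 mulr1.
by rewrite iZ !scalerA; congr (_ *: _); ring.
Qed.

Lemma loc_ext (W : lmodType Rp) (A B : Np -> W)
  (hA : forall r z, A (r *: z) = r *: A z) (hB : forall r z, B (r *: z) = r *: B z) :
  (forall x, A (iota x) = B (iota x)) -> forall z, A z = B z.
Proof.
move=> h z; have [_ [_ [isurj _]]] := hN.
have [x [s [t [_ [_ ->]]]]] := isurj z.
by rewrite hA hB h.
Qed.

End Mod.
End Loc.


Lemma fchoice (I T : Type) (P : I -> T -> Prop) :
  (forall i, exists t, P i t) -> exists f : I -> T, forall i, P i (f i).
Proof.
move=> h; exists (fun i => proj1_sig (constructive_indefinite_description _ (h i))).
move=> i; exact: (proj2_sig (constructive_indefinite_description _ (h i))).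
Qed.

Section NZ.
Variable Rp : comPzRingType. Hypothesis h : (1:Rp) != 0.
Definition Rnz : Type := Rp.
HB.instance Definition _ := GRing.ComPzRing.on Rnz.
HB.instance Definition _ := GRing.PzSemiRing_isNonZero.Build Rnz h.
Lemma mulmx1_min' m n (A : 'M[Rp]_(m,n)) B : A *m B = 1%:M -> (m <= n)%N.
Proof. move=> hAB. exact: (@mulmx1_min Rnz m n A B hAB). Qed.
End NZ.

Section Bound.
Variables (R : comPzRingType) (p : R -> Prop) (hp : prime_ideal p)
  (Rp : comPzRingType) (phi : {rmorphism R -> Rp}) (hRp : is_loc_ring p phi).
Variables (N : lmodType R) (Np : lmodType Rp) (iota : N -> Np)
  (hN : is_loc_mod p phi iota).

Lemma iota_sum n (r : 'I_n -> R) (y : 'I_n -> N) :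
  iota (\sum_k r k *: y k) = \sum_k phi (r k) *: iota (y k).
Proof.
have [iD [iZ _]] := hN.
rewrite (big_morph iota iD (iota0 hN)); apply: eq_bigr => k _; exact: iZ.
Qed.

Lemma Dn_bound : fin_gen N -> exists NN, forall T n, @Dn Rp Np T n -> (n <= NN)%N.
Proof.
move=> [NN [x hx]]; exists NN => T n [g [_ [th [hl hd]]]].
have [iD [iZ [isurj _]]] := hN.
have hZ := span_submod (fun k => iota (x k)).
have span : forall z : Np, exists A : 'I_NN -> Rp, z = \sum_k A k *: iota (x k).
  move=> z; have [m [s [t [_ [_ ->]]]]] := isurj z.
  have [n' [r [y [hy ->]]]] := hx m.
  have [_ [_ hZZ]] := hZ; apply: hZZ.
  rewrite iota_sum; apply: (submod_sum hZ) => k.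
  have [k' ->] := hy k.
  by exists (fun m => (m == k')%:R); rewrite sum_delta.
have [Af hAf] := fchoice (fun l => span (g l)).
pose Amx : 'M[Rp]_(n, NN) := \matrix_(l, k) Af l k.
pose Bmx : 'M[Rp]_(NN, n) := \matrix_(k, l) th l (iota (x k)).
apply: (@mulmx1_min' Rp (introN eqP (Rp_nontriv hp hRp)) _ _ Amx Bmx).
apply/matrixP => l m; rewrite !mxE.
rewrite eq_sym -(hd m l) (hAf l) islin_sum //.
apply: eq_bigr => k _; by rewrite !mxE.
Qed.

End Bound.

Unset Implicit Arguments. Set Strict Implicit.

Lemma split_l m n (a : 'I_m) : split (lshift n a) = inl a.
Proof. exact: (unsplitK (inl _ a)). Qed.
Lemma split_r m n (a : 'I_n) : split (rshift m a) = inr a.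
Proof. exact: (unsplitK (inr _ a)). Qed.

Lemma gen_sub_submod (K : pzRingType) (V : lmodType K) (S : V -> Prop) :
  submod (gen_sub S).
Proof.
split.
  exists 0%N, (fun=> 0), (fun=> 0); split; first by case.
  by rewrite big_ord0.
split.
  move=> x y [n1 [r1 [x1 [h1 ->]]]] [n2 [r2 [x2 [h2 ->]]]].
  exists (n1 + n2)%N, (fun k => match split k with inl a => r1 a | inr b => r2 b end),
    (fun k => match split k with inl a => x1 a | inr b => x2 b end); split.
    by move=> k; case: (split k).
  rewrite big_split_ord /=; congr (_ + _); apply: eq_bigr => k _.
    by rewrite split_l.
  by rewrite split_r.
move=> c x [n1 [r1 [x1 [h1 ->]]]].
exists n1, (fun k => c * r1 k), x1; split => //.
by rewrite scaler_sumr; apply: eq_bigr => k _; rewrite scalerA.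
Qed.

Lemma ex_max (P : nat -> Prop) NN : P 0%N -> (forall n, P n -> (n <= NN)%N) ->
  exists d, P d /\ forall n, P n -> (n <= d)%N.
Proof.
move=> h0 hb.
pose pb := fun n => if excluded_middle_informative (P n) then true else false.
have pbP : forall n, pb n <-> P n.
  by move=> n; rewrite /pb; case: excluded_middle_informative.
have exP : exists n, pb n by exists 0%N; apply/pbP.
have ubP : forall n, pb n -> (n <= NN)%N by move=> n /pbP; apply: hb.
case: (ex_maxnP exP ubP) => d hd hmax.
exists d; split; first exact/pbP.
by move=> n /pbP; apply: hmax.
Qed.


Lemma zmod_rearr (V : zmodType) (a b x y : V) : a + x = b + y -> a - b = y - x.
Proof. move=> h; have -> : a = b + y - x by rewrite -h addrK.
by rewrite addrAC [b + y]addrC addrK. Qed.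

Theorem lemma3p11
  (R : comPzRingType) (hR : noetherian R)
  (M : lmodType R) (hM : fin_gen M)
  (S : M -> Prop)
  (F : M -> Prop) (i : nat) (hF : free_of_rank F i)
  (hFS : forall v, F v -> gen_sub S v)
  (M' : lmodType R) (j : {linear M' -> M}) (hj : injective j)
  (hdsum : internal_dsum F (fun v => exists m', v = j m'))
  (S' : M' -> Prop)
  (hS' : forall m', S' m' <-> exists s f, S s /\ F f /\ s = f + j m')
  (p : R -> Prop) (hp : prime_ideal p)
  (Rp : comPzRingType) (phi : {rmorphism R -> Rp}) (hRp : is_loc_ring p phi)
  (Mp : lmodType Rp) (iota : M -> Mp) (hMp : is_loc_mod p phi iota)
  (M'p : lmodType Rp) (iota' : M' -> M'p) (hM'p : is_loc_mod p phi iota') :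
  exists d : nat,
    is_max (delta_prop (loc_sub p phi iota (gen_sub S))) d /\
    is_max (delta_prop (loc_sub p phi iota' (gen_sub S'))) (d - i)%N.
Proof.
have [hFsub [b [hbF [hbli hbsp]]]] := hF.
have [_ [hJsub [hint hdec]]] := hdsum.
have dec : forall m, exists rm : ('I_i -> R) * M', m = \sum_k rm.1 k *: b k + j rm.2.
  move=> m; have [f [m0 [hf [[m' ->] ->]]]] := hdec m.
  by have [r ->] := hbsp f hf; exists (r, m').
have [Dc hDc] := fchoice dec.
pose cf m := (Dc m).1. pose q m := (Dc m).2.
have hD : forall m, m = \sum_k cf m k *: b k + j (q m) by move=> m; exact: hDc m.
have huniq : forall m (r : 'I_i -> R) m', m = \sum_k r k *: b k + j m' ->
    (forall k, cf m k = r k) /\ q m = m'.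
  move=> m r m' hm.
  have e : \sum_k (cf m k - r k) *: b k = j (m' - q m).
    rewrite linearB /=.
    under eq_bigr => k _ do rewrite scalerBl.
    rewrite sumrB; apply: zmod_rearr; by rewrite -hD -hm.
  have hF0 : F (\sum_k (cf m k - r k) *: b k) by apply: submod_sum.
  have h0 := hint _ hF0 (ex_intro _ _ e).
  split.
    move=> k; apply/eqP; rewrite -subr_eq0; apply/eqP; exact: (hbli _ h0 k).
  have h1 : j (m' - q m) = 0 by rewrite -e.
  by apply: hj; move: h1; rewrite linearB => /eqP; rewrite subr_eq0 => /eqP.
have hqD : forall x y, q (x + y) = q x + q y /\ forall k, cf (x + y) k = cf x k + cf y k.
  move=> x y.
  have ex : x + y = \sum_k (cf x k + cf y k) *: b k + j (q x + q y).
    rewrite {1}(hD x) {1}(hD y) linearD addrACA; congr (_ + _).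
    by rewrite -big_split; apply: eq_bigr => k _; rewrite scalerDl.
  have [h1 h2] := huniq _ _ _ ex.
  by split.
have hqZ : forall (r : R) x, q (r *: x) = r *: q x /\ forall k, cf (r *: x) k = r * cf x k.
  move=> r x.
  have ex : r *: x = \sum_k (r * cf x k) *: b k + j (r *: q x).
    rewrite {1}(hD x) scalerDr scaler_sumr linearZZ; congr (_ + _).
    by apply: eq_bigr => k _; rewrite scalerA.
  have [h1 h2] := huniq _ _ _ ex.
  by split.
have hb : forall m, (forall k, cf (b m) k = (k == m)%:R) /\ q (b m) = 0.
  move=> m; apply: huniq; by rewrite sum_delta linear0 addr0.
have hjx : forall x, (forall k, cf (j x) k = 0) /\ q (j x) = x.
  move=> x; apply: huniq; by rewrite big1 ?add0r // => k _; rewrite scale0r.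
have hq0 : q 0 = 0 by have := (hqZ 0 0).1; rewrite !scale0r.
have q_sum : forall n (r : 'I_n -> R) (y : 'I_n -> M), q (\sum_k r k *: y k) = \sum_k r k *: q (y k).
  move=> n r y; rewrite (big_morph q (fun x y => (hqD x y).1) hq0).
  by apply: eq_bigr => k _; rewrite (hqZ _ _).1.
have hSq : forall x, gen_sub S x -> gen_sub S' (q x).
  move=> x [n [r [y [hy ->]]]]; exists n, r, (fun k => q (y k)); split; last exact: q_sum.
  move=> k; apply/hS'; exists (y k), (\sum_l cf (y k) l *: b l); split => //.
  split; last exact: hD.
  by apply: submod_sum.
have hGS := @gen_sub_submod _ _ S.
have hSj : forall x, gen_sub S' x -> gen_sub S (j x).
  move=> x [n [r [y [hy ->]]]].
  rewrite linear_sum.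
  under eq_bigr => k _ do rewrite linearZZ.
  apply: submod_sum => // k.
  have [s [f [hs [hf he]]]] := (hS' (y k)).1 (hy k).
  have -> : j (y k) = s - f by rewrite he addrC addKr.
  apply: submodB => //; last exact: hFS.
  by exists 1%N, (fun=> 1), (fun=> s); split => //; rewrite big_ord1 scale1r.
have [iD [iZ _]] := hMp.
have [iD' [iZ' _]] := hM'p.
have kjD : forall x y, iota (j (x + y)) = iota (j x) + iota (j y).
  by move=> x y; rewrite linearD iD.
have kjZ : forall (r : R) x, iota (j (r *: x)) = phi r *: iota (j x).
  by move=> r x; rewrite linearZZ iZ.
have [jp [jpD [jpZ [jpi jpt]]]] := @loc_map _ _ hp _ _ hRp _ _ _ hM'p _
  (fun x => iota (j x)) kjD kjZ.
have kqD : forall x y, iota' (q (x + y)) = iota' (q x) + iota' (q y).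
  by move=> x y; rewrite (hqD x y).1 iD'.
have kqZ : forall (r : R) x, iota' (q (r *: x)) = phi r *: iota' (q x).
  by move=> r x; rewrite (hqZ r x).1 iZ'.
have [qp [qpD [qpZ [qpi qpt]]]] := @loc_map _ _ hp _ _ hRp _ _ _ hMp _
  (fun x => iota' (q x)) kqD kqZ.
have chiex : forall k, exists H : Mp -> Rp^o, (forall z w, H (z + w) = H z + H w) /\
    (forall r z, H (r *: z) = r *: H z) /\ (forall x, H (iota x) = phi (cf x k)).
  move=> k.
  have kcD : forall x y, (phi (cf (x + y) k) : Rp^o) = phi (cf x k) + phi (cf y k).
    by move=> x y; rewrite (hqD x y).2 rmorphD.
  have kcZ : forall (r : R) x, (phi (cf (r *: x) k) : Rp^o) = phi r *: (phi (cf x k) : Rp^o).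
    by move=> r x; rewrite (hqZ r x).2 rmorphM.
  have [H [HD [HZ [Hi _]]]] := @loc_map _ _ hp _ _ hRp _ _ _ hMp (Rp^o)
    (fun x => phi (cf x k) : Rp^o) kcD kcZ.
  by exists H.
have [chi hchi] := fchoice chiex.
have chilin : forall k, islin (chi k).
  by move=> k; have [hD1 [hZ1 _]] := hchi k; split.
pose e k := iota (b k).
pose T := loc_sub p phi iota (gen_sub S).
pose T' := loc_sub p phi iota' (gen_sub S').
have hT : submod T := loc_submod hp hRp hMp hGS.
have hT' : submod T' := loc_submod hp hRp hM'p (@gen_sub_submod _ _ S').
have I1 : forall z, qp (jp z) = z.
  apply: (loc_ext hM'p (A := fun z => qp (jp z)) (B := id)).
  - by move=> r z; rewrite jpZ qpZ.
  - by [].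
  - by move=> x; rewrite jpi qpi (hjx x).2.
have I2 : forall k z, chi k (jp z) = 0.
  move=> k; have [_ [HZ Hi]] := hchi k.
  apply: (loc_ext hM'p (A := fun z => chi k (jp z)) (B := fun _ => (0 : Rp^o))).
  - by move=> r z; rewrite jpZ HZ.
  - by move=> r z; rewrite scaler0.
  - by move=> x; rewrite jpi Hi (hjx x).1 rmorph0.
have I3 : forall m, qp (e m) = 0 by move=> m; rewrite qpi (hb m).2 (iota0 hM'p).
have I4 : forall k m, chi k (e m) = (k == m)%:R.
  by move=> k m; have [_ [_ Hi]] := hchi k; rewrite Hi (hb m).1 rmorph_nat.
have I5 : forall z, jp (qp z) = z - \sum_k chi k z *: e k.
  move=> z; apply/eqP; rewrite eq_sym subr_eq addrC -subr_eq; apply/eqP; move: z.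
  apply: (loc_ext hMp (A := fun z => z - jp (qp z)) (B := fun z => \sum_k chi k z *: e k)).
  - by move=> r z; rewrite qpZ jpZ scalerBr.
  - move=> r z; rewrite scaler_sumr; apply: eq_bigr => k _.
    by have [_ [HZ _]] := hchi k; rewrite HZ scalerA.
  - move=> x; rewrite qpi jpi {1}(hD x) iD addrK (iota_sum hMp).
    by apply: eq_bigr => k _; have [_ [_ ->]] := hchi k.
have I6 : forall k, T (e k).
  move=> k; exists (b k), 1, 1; split; first by apply: hFS.
  split; first exact: pN1 hp.
  by rewrite rmorph1 mulr1 scale1r.
have I7 : forall z, T z -> T' (qp z).
  move=> z [x [s [t [hx [hs [hst ->]]]]]].
  exists (q x), s, t; split; first exact: hSq.
  by split => //; split => //; rewrite qpZ qpi.
have I8 : forall z, T' z -> T (jp z).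
  move=> z [x [s [t [hx [hs [hst ->]]]]]].
  exists (j x), s, t; split; first exact: hSj.
  by split => //; split => //; rewrite jpZ jpi.
have easy : forall n', Dn T' n' -> Dn T (i + n').
  move=> n' [g' [hg' [th' [hl' hd']]]].
  exists (fun k => match split k with inl a => e a | inr c => jp (g' c) end); split.
    by move=> k; case: (split k) => a; [apply: I6| apply: I8].
  exists (fun k z => match split k with inl a => chi a z | inr c => th' c (qp z) end); split.
    move=> k; case: (split k) => a //.
    have [hD1 hZ1] := hl' a; split.
      by move=> x y; rewrite qpD hD1.
    by move=> r x; rewrite qpZ hZ1.
  move=> k l.
  case: (splitP k) => a ha; case: (splitP l) => c hc;
    rewrite -[k == l](inj_eq (@ord_inj _)) ha hc.
  - by rewrite I4 (inj_eq (@ord_inj _)).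
  - rewrite I2; case: eqP => // h.
    by have := ltn_ord a; rewrite h -{2}(addn0 i) ltn_add2l.
  - rewrite I3 (islin0 (hl' a)); case: eqP => // h.
    by have := ltn_ord c; rewrite -h -{2}(addn0 i) ltn_add2l.
  - by rewrite I1 hd' eqn_add2l (inj_eq (@ord_inj _)).
have hard : forall n, Dn T n -> Dn T' (n - i).
  move=> n [g [hg [th [hl hd]]]].
  have [g'' [hg'' [th'' [hl'' hd'']]]] :=
    peel (hloc hp hRp) hT chilin I6 I4 hg hl hd.
  exists (fun l => qp (g'' l)); split; first by move=> l; apply: I7; exact: (hg'' l).1.
  exists (fun k z => th'' k (jp z)); split.
    move=> k; have [hD1 hZ1] := hl'' k; split.
      by move=> x y; rewrite jpD hD1.
    by move=> r x; rewrite jpZ hZ1.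
  move=> k l; rewrite I5 big1 ?subr0; first exact: hd''.
  by move=> m _; rewrite (hg'' l).2 scale0r.
have [NN hNN] := Dn_bound hp hRp hMp hM.
have D0 : Dn T 0.
  by exists (fun=> 0); split; [case| exists (fun _ _ => 0); split; case].
have [d [hdd hdmax]] := @ex_max _ NN D0 (hNN T).
have D0' : Dn T' 0.
  by exists (fun=> 0); split; [case| exists (fun _ _ => 0); split; case].
have hid : (i <= d)%N by apply: hdmax; have := easy 0%N D0'; rewrite addn0.
exists d; split.
  split; first exact: Dn_delta.
  by move=> n /delta_Dn; apply: hdmax.
split; first by apply: Dn_delta => //; apply: hard.
move=> n' /delta_Dn /easy /hdmax h.
by rewrite leq_subRL // addnC.
Qed.
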